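(* Let $(X,d,f)$ be a dynamical system and $\mathcal{A}=\{\mathcal{U}_n\}_{n\in\mathbb{N}}$ a complete defining sequence of $(X,d)$. (i) $(X,d,f)$ is topologically conjugate to the inverse limit of $(\hookrightarrow,(\mathcal{O}(\mathcal{U}_n),\sigma_n))$ equipped with the map $\sigma^*=(\sigma_n)^*$. (ii) If in addition $\mathcal{A}$ is tame and $f$ is uniformly continuous, then the conjugacy can be made uniform (the conjugating homeomorphism and its inverse are uniformly continuous).
   Context: Spaces are nonempty separable metrizable; a dynamical system $(X,d,f)$ has admissible metric $d$ and continuous $f$. A partition is a cover by pairwise disjoint nonempty clopen sets. A defining sequence is a sequence $\{\mathcal{U}_n\}$ of partitions, each refining the previous, whose union is a basis; complete if nested sequences $U_n\in\mathcal{U}_n$ have nonempty intersection; tame if $\sup\{\operatorname{diam}O:O\in\mathcal{U}_n\}\to0$ and each $\mathcal{U}_n$ is $\rho_n$-separated for some $\rho_n>0$. For a partition $\mathcal{U}$ (discrete metric), $\mathcal{O}(\mathcal{U})=\{(O_i)_{i\in\mathbb{N}}\in\mathcal{U}^{\mathbb{N}}: \forall k\ \exists x\in X \text{ with } f^i(x)\in O_i \text{ for } 0\le i\le k\}$, a shift space over the alphabet $\mathcal{U}$ with shift map $\sigma_n$ and metric $1/(i+1)$ ($i$ least index of disagreement). The bonding map $\hookrightarrow:\mathcal{O}(\mathcal{U}_{n+1})\to\mathcal{O}(\mathcal{U}_n)$ sends $(O_i)$ to the unique $(V_i)\in\mathcal{U}_n^{\mathbb{N}}$ with $O_i\subseteq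 V_i$. The inverse limit is $\{(y_n)\in\prod_n\mathcal{O}(\mathcal{U}_n): y_n=\hookrightarrow(y_{n+1})\}$ with metric $d_\Pi((y_n),(z_n))=\max_n d(y_n,z_n)/(n+1)$, and $\sigma^*$ is the restriction of $\prod_n\sigma_n$. *)

(* Defs.v *)
From HB Require Import structures.
From mathcomp Require Import all_boot all_order all_algebra.
From mathcomp Require Import boolp classical_sets reals.
Set Implicit Arguments. Unset Strict Implicit. Unset Printing Implicit Defensive.
Import Order.TTheory GRing.Theory Num.Theory.
Local Open Scope classical_set_scope.
Local Open Scope ring_scope.

Section Defs.
Variable R : realType.

Definition is_metric (X : Type) (d : X -> X -> R) : Prop :=
  [/\ forall x y, 0 <= d x y,
      forall x y, d x y = 0 <-> x = y,
      forall x y, d x y = d y x &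
      forall x y z, d x z <= d x y + d y z].

Definition separable (X : Type) (d : X -> X -> R) : Prop :=
  exists s : nat -> X, forall x (e : R), 0 < e -> exists n, d x (s n) < e.

Definition mopen (X : Type) (d : X -> X -> R) (A : set X) : Prop :=
  forall x, A x -> exists2 e : R, 0 < e & forall y, d x y < e -> A y.
Definition mclosed (X : Type) (d : X -> X -> R) (A : set X) : Prop :=
  mopen d (~` A).
Definition mclopen (X : Type) (d : X -> X -> R) (A : set X) : Prop :=
  mopen d A /\ mclosed d A.

Definition cont_on (T S : Type) (dT : T -> T -> R) (dS : S -> S -> R)
  (A : set T) (g : T -> S) : Prop :=
  forall a, A a -> forall e : R, 0 < e -> exists2 del : R, 0 < del &
    forall b, A b -> dT a b < del -> dS (g a) (g b) < e.
Definition unif_cont_on (T S : Type) (dT : T -> T -> R) (dS : S -> S -> R)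
  (A : set T) (g : T -> S) : Prop :=
  forall e : R, 0 < e -> exists2 del : R, 0 < del &
    forall a b, A a -> A b -> dT a b < del -> dS (g a) (g b) < e.

Definition is_partition (X : Type) (d : X -> X -> R) (P : set (set X)) : Prop :=
  [/\ forall A, P A -> A !=set0,
      forall A, P A -> mclopen d A,
      forall A B, P A -> P B -> A <> B -> A `&` B = set0 &
      forall x, exists2 A, P A & A x].

Definition refines (X : Type) (P Q : set (set X)) : Prop :=
  forall A, P A -> exists2 B, Q B & A `<=` B.

Definition defining_sequence (X : Type) (d : X -> X -> R)
  (U : nat -> set (set X)) : Prop :=
  [/\ forall n, is_partition d (U n),
      forall n, refines (U n.+1) (U n) &
      forall O x, mopen d O -> O x ->
        exists n, exists2 B, U n B & B x /\ B `<=` O].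

Definition complete_defseq (X : Type) (d : X -> X -> R)
  (U : nat -> set (set X)) : Prop :=
  defining_sequence d U /\
  forall V : nat -> set X, (forall n, U n (V n)) ->
    (forall n, V n.+1 `<=` V n) -> exists x, forall n, V n x.

Definition tame_defseq (X : Type) (d : X -> X -> R)
  (U : nat -> set (set X)) : Prop :=
  (forall e : R, 0 < e -> exists N, forall n, (N <= n)%N ->
     forall O, U n O -> forall x y, O x -> O y -> d x y <= e) /\
  (forall n, exists2 rho : R, 0 < rho &
     forall A B, U n A -> U n B -> A <> B ->
       forall a b, A a -> B b -> rho <= d a b).

Definition orbit_space (X : Type) (f : X -> X) (P : set (set X))
  : set (nat -> set X) :=
  [set s | (forall i, P (s i)) /\
           forall k, exists x, forall i, (i <= k)%N -> s i (iter i f x)].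

Definition shift (X : Type) (s : nat -> set X) : nat -> set X :=
  fun i => s i.+1.

Definition first_diff (X : Type) (s t : nat -> set X) : nat :=
  xget 0%N [set i | s i <> t i /\ forall j, (j < i)%N -> s j = t j].

Definition shift_dist (X : Type) (s t : nat -> set X) : R :=
  if `[< s = t >] then 0 else 1 / ((first_diff s t)%:R + 1).

(* the bonding map: t is the image of s under P-bonding, i.e. t is the unique
   element of P^N with s i included in t i for all i *)
Definition bond_of (X : Type) (P : set (set X)) (s t : nat -> set X) : Prop :=
  forall i, P (t i) /\ s i `<=` t i.

Definition inv_limit (X : Type) (f : X -> X) (U : nat -> set (set X))
  : set (nat -> nat -> set X) :=
  [set y | (forall n, orbit_space f (U n) (y n)) /\
           forall n, bond_of (U n) (y n.+1) (y n)].

(* d_Pi(y,z) = max_n d(y_n,z_n)/(n+1) (the max is the sup, which is attained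
   whenever it is positive) *)
Definition dPi (X : Type) (y z : nat -> nat -> set X) : R :=
  sup [set shift_dist (y n) (z n) / (n%:R + 1) | n in [set: nat]].

Definition sigma_star (X : Type) (y : nat -> nat -> set X) : nat -> nat -> set X :=
  fun n => shift (y n).

Definition conjugacy (X : Type) (d : X -> X -> R) (f : X -> X)
  (U : nat -> set (set X)) (h : X -> nat -> nat -> set X)
  (g : (nat -> nat -> set X) -> X) : Prop :=
  [/\ forall x, inv_limit f U (h x),
      forall x, g (h x) = x,
      forall y, inv_limit f U y -> h (g y) = y,
      cont_on d (@dPi X) setT h /\ cont_on (@dPi X) d (inv_limit f U) g &
      forall x, h (f x) = sigma_star (h x)].

Definition topologically_conjugate_to_invlim (X : Type) (d : X -> X -> R)
  (f : X -> X) (U : nat -> set (set X)) : Prop :=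
  exists h g, conjugacy d f U h g.

Definition uniformly_conjugate_to_invlim (X : Type) (d : X -> X -> R)
  (f : X -> X) (U : nat -> set (set X)) : Prop :=
  exists h g, [/\ conjugacy d f U h g,
                  unif_cont_on d (@dPi X) setT h &
                  unif_cont_on (@dPi X) d (inv_limit f U) g].

End Defs.

(* Main.v *)
Require Import Defs.
From mathcomp Require Import all_boot all_order all_algebra.
From mathcomp Require Import boolp classical_sets reals.
From mathcomp Require Import lra.
Import Order.TTheory GRing.Theory Num.Theory.
Local Open Scope classical_set_scope.
Local Open Scope ring_scope.

Lemma inv_le (R : realType) (M k : nat) : (M <= k)%N ->
  1 / (k%:R + 1) <= 1 / (M%:R + 1) :> R.
Proof.
move=> Mk.
have hM : 0 < M%:R + 1 :> R by rewrite ltr_wpDl.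
have hk : 0 < k%:R + 1 :> R by rewrite ltr_wpDl.
rewrite ler_pdivlMr // mulrAC ler_pdivrMr // !mul1r lerD2r ler_nat //.
Qed.

Lemma inv_pos (R : realType) (k : nat) : 0 < 1 / (k%:R + 1) :> R.
Proof. by rewrite divr_gt0 // ltr_wpDl. Qed.

Lemma inv_le1 (R : realType) (k : nat) : 1 / (k%:R + 1) <= 1 :> R.
Proof. have := @inv_le R 0%N k (leq0n k). by rewrite add0r divr1. Qed.

Lemma fd_spec (X : Type) (s t : nat -> set X) : s <> t ->
  s (first_diff s t) <> t (first_diff s t) /\
  forall j, (j < first_diff s t)%N -> s j = t j.
Proof.
move=> NE.
have ex : exists i, `[< s i <> t i >].
  apply: contra_notP NE => H; apply: funext => i.
  apply: contra_notP H => H; exists i; exact/asboolP.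
rewrite /first_diff; apply: (@xgetPex _ 0%N [set i | s i <> t i /\ forall j, (j < i)%N -> s j = t j]).
case: (ex_minnP ex) => k /asboolP Hk Hmin; exists k; split => // j jk.
case: (pselect (s j = t j)) => // H; exfalso.
have := Hmin j (asboolT H). by rewrite leqNgt jk.
Qed.

Lemma sd_ge0 (R : realType) (X : Type) (s t : nat -> set X) : 0 <= shift_dist R s t.
Proof. rewrite /shift_dist; case: asboolP => _ //; exact/ltW/inv_pos. Qed.

Lemma sd_le1 (R : realType) (X : Type) (s t : nat -> set X) : shift_dist R s t <= 1.
Proof. rewrite /shift_dist; case: asboolP => _ //; exact/inv_le1. Qed.

Lemma sd_agree (R : realType) (X : Type) (M : nat) (s t : nat -> set X) :
  (forall j, (j < M)%N -> s j = t j) -> shift_dist R s t <= 1 / (M%:R + 1).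
Proof.
move=> H; rewrite /shift_dist; case: asboolP => E; first exact/ltW/inv_pos.
have [H1 _] := @fd_spec _ s t E.
apply: inv_le; rewrite leqNgt; apply/negP => /H; exact: H1.
Qed.

Lemma sd_lt1 (R : realType) (X : Type) (s t : nat -> set X) :
  shift_dist R s t < 1 -> s 0%N = t 0%N.
Proof.
rewrite /shift_dist; case: asboolP => [->//|E].
have [_ H2] := @fd_spec _ s t E.
case: (posnP (first_diff s t)) => [->|/H2 //].
by rewrite add0r divr1 ltxx.
Qed.

Lemma term_le1 (R : realType) (X : Type) (s t : nat -> set X) (n : nat) :
  shift_dist R s t / (n%:R + 1) <= shift_dist R s t.
Proof.
have hn : 0 < n%:R + 1 :> R by rewrite ltr_wpDl.
rewrite ler_pdivrMr //; have := @sd_ge0 R X s t; have : 0 <= n%:R :> R by [].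
move=> a b; nra.
Qed.

Lemma term_le_inv (R : realType) (X : Type) (s t : nat -> set X) (n : nat) :
  shift_dist R s t / (n%:R + 1) <= 1 / (n%:R + 1).
Proof.
have hn : 0 < n%:R + 1 :> R by rewrite ltr_wpDl.
by rewrite ler_pM2r ?invr_gt0 // (@sd_le1 R X s t).
Qed.

Lemma dPi_le (R : realType) (X : Type) (y z : nat -> nat -> set X) (c : R) :
  (forall n, shift_dist R (y n) (z n) / (n%:R + 1) <= c) -> dPi R y z <= c.
Proof.
move=> H; apply: ge_sup; first by exists (shift_dist R (y 0%N) (z 0%N) / (0%:R + 1)), 0%N.
by move=> _ [n _ <-].
Qed.

Lemma term_le_dPi (R : realType) (X : Type) (y z : nat -> nat -> set X) (n : nat) :
  shift_dist R (y n) (z n) / (n%:R + 1) <= dPi R y z.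
Proof.
apply: ub_le_sup; last by exists n.
exists 1 => _ [m _ <-]; exact: (le_trans (@term_le1 R X _ _ m) (@sd_le1 R X _ _)).
Qed.

Lemma blk_unique (R : realType) (X : Type) (d : X -> X -> R) (P : set (set X))
  (A B : set X) (x : X) : is_partition d P -> P A -> P B -> A x -> B x -> A = B.
Proof.
case=> _ _ Hd _ PA PB Ax Bx; case: (pselect (A = B)) => // NE.
have := Hd A B PA PB NE; move/seteqP => [/(_ x) H _]; exfalso; exact: H.
Qed.

Lemma iter_cont (R : realType) (X : Type) (d : X -> X -> R) (f : X -> X) (i : nat) :
  cont_on d d setT f -> cont_on d d setT (iter i f).
Proof.
move=> fc; elim: i => [|i IH] a _ e e0 /=; first by exists e.
have [del1 d10 H1] := fc (iter i f a) I e e0.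
have [del2 d20 H2] := IH a I del1 d10.
exists del2 => // b _ ab; exact: H1 I (H2 b I ab).
Qed.

Lemma iter_ucont (R : realType) (X : Type) (d : X -> X -> R) (f : X -> X) (i : nat) :
  unif_cont_on d d setT f -> unif_cont_on d d setT (iter i f).
Proof.
move=> fc; elim: i => [|i IH] e e0 /=; first by exists e.
have [del1 d10 H1] := fc e e0.
have [del2 d20 H2] := IH del1 d10.
exists del2 => // a b _ _ ab; exact: H1 _ _ I I (H2 a b I I ab).
Qed.

Lemma open_ball (R : realType) (X : Type) (d : X -> X -> R) (z : X) (e : R) :
  is_metric d -> mopen d [set w | d z w < e].
Proof.
case=> _ _ _ tri w /= zw; exists (e - d z w); first by rewrite subr_gt0.
move=> v wv; have := tri z w v; move=> h; rewrite /=; lra.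
Qed.

Lemma open_neq (R : realType) (X : Type) (d : X -> X -> R) (z : X) :
  is_metric d -> mopen d [set w | w <> z].
Proof.
case=> d0 dE _ _ w /= wz; exists (d w z).
  rewrite lt_neqAle d0 andbT; apply/eqP => /esym /dE; exact: wz.
by move=> v wv vz; rewrite vz ltxx in wv.
Qed.

Arguments blk_unique {R X d P A B x}.
Arguments iter_cont {R X d f} i.
Arguments iter_ucont {R X d f} i.
Arguments open_ball {R X d} z e.
Arguments open_neq {R X d} z.
Arguments inv_le {R M k}.
Arguments term_le_dPi R {X} y z n.
Arguments dPi_le {R X y z c}.

Theorem theorem4p13 (R : realType) (X : Type) (d : X -> X -> R)
  (f : X -> X) (U : nat -> set (set X)) :
  is_metric d -> separable d -> (exists x : X, True) ->
  cont_on d d setT f ->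
  complete_defseq d U ->
  topologically_conjugate_to_invlim d f U /\
  (tame_defseq d U -> unif_cont_on d d setT f ->
   uniformly_conjugate_to_invlim d f U).
Proof.
move=> Hm _ [x0 _] fc [[HU Href Hbas] Hcomp].
have /choice[hh0 Hhh0] : forall p : nat * X, exists A, U p.1 A /\ A p.2.
  by move=> [n x]; case: (HU n) => _ _ _ /(_ x) [A UA Ax]; exists A.
pose hh n x := hh0 (n, x).
have Uopen : forall n A, U n A -> mopen d A.
  by move=> n A UA; case: (HU n) => _ /(_ A UA) [].
have Hhh : forall n x, U n (hh n x) /\ hh n x x by move=> n x; exact: (Hhh0 (n, x)).
have B1 : forall n x A, U n A -> A x -> hh n x = A.
  move=> n x A UA Ax; have [H1 H2] := Hhh n x; exact: blk_unique (HU n) H1 UA H2 Ax.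
have B2 : forall n m x, (n <= m)%N -> hh m x `<=` hh n x.
  move=> n m x; elim: m => [|m IH]; first by rewrite leqn0 => /eqP ->.
  rewrite leq_eqVlt => /orP[/eqP -> //|]; rewrite ltnS => /IH H.
  apply: subset_trans H.
  have [B UB sB] := Href m _ (Hhh m.+1 x).1.
  by rewrite (B1 m x B UB (sB _ (Hhh m.+1 x).2)).
have B3 : forall n m a b, (n <= m)%N -> hh m a = hh m b -> hh n a = hh n b.
  move=> n m a b nm E; apply: (B1); first exact: (Hhh n b).1.
  apply: (B2 n m b nm); rewrite -E; exact: (Hhh m a).2.
have Sep : forall z z', (forall n, hh n z z') -> z = z'.
  move=> z z' H; case: (pselect (z = z')) => // NE; exfalso.
  have [n [B UB [Bz BO]]] := Hbas _ z (open_neq z' Hm) NE.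
  have := H n; rewrite (B1 n z B UB Bz) => /BO; exact.
pose h x := fun n i => hh n (iter i f x).
have /choice[g Hg] : forall y : nat -> nat -> set X, exists z,
    inv_limit f U y -> forall n, y n 0%N z.
  move=> y; case: (pselect (inv_limit f U y)) => [[Ho Hb]|]; last by exists x0.
  have [z Hz] := Hcomp (fun n => y n 0%N) (fun n => (Ho n).1 0%N)
     (fun n => (Hb n 0%N).2).
  by exists z.
have Y0 : forall y n i, inv_limit f U y -> U n (y n i).
  by move=> y n i [Ho _]; exact: (Ho n).1.
have Y1 : forall y n m i, inv_limit f U y -> (n <= m)%N -> y m i `<=` y n i.
  move=> y n m i [Ho Hb]; elim: m => [|m IH]; first by rewrite leqn0 => /eqP ->.
  rewrite leq_eqVlt => /orP[/eqP -> //|]; rewrite ltnS => /IH H.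
  exact: subset_trans (Hb m i).2 H.
have Hinv : forall x, inv_limit f U (h x).
  move=> x; split => n.
    split; first by move=> i; exact: (Hhh n _).1.
    by move=> k; exists x => i _; exact: (Hhh n _).2.
  move=> i; split; first exact: (Hhh n _).1.
  exact: B2.
have Hgh : forall x, g (h x) = x.
  move=> x; apply/esym/Sep => n; exact: (Hg (h x) (Hinv x) n).
have Hhg : forall y, inv_limit f U y -> h (g y) = y.
  move=> y Hy; apply: funext => n; apply: funext => i.
  set z := g y.
  apply: (B1); first exact: Y0.
  pose V := hh n (iter i f z).
  have [eps eps0 Heps] := Uopen n _ (Hhh n (iter i f z)).1 (iter i f z) (Hhh n _).2.
  have [del del0 Hdel] := iter_cont i fc z I eps eps0.
  have zz : d z z < del by case: Hm => _ dE _ _; rewrite (proj2 (dE z z) erefl).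
  have [m [B UB [Bz BO]]] := Hbas _ z (open_ball z del Hm) zz.
  pose m' := maxn m n.
  have [x Hx] := (Hy.1 m').2 i.
  have x0m : y m' 0%N x by exact: Hx 0%N (leq0n _).
  have Hz : y m' 0%N z by exact: Hg y Hy m'.
  have xB : B x.
    rewrite -(B1 m z B UB Bz); apply: (B2 m m' z (leq_maxl _ _)).
    by rewrite (B1 m' z _ (Y0 y m' 0%N Hy) Hz).
  have xV : V (iter i f x) by apply: Heps; apply: Hdel => //; exact: BO.
  have xy : y n i (iter i f x).
    by apply: (Y1 y n m' i Hy (leq_maxr _ _)); exact: Hx.
  rewrite -(B1 n (iter i f x) (y n i) (Y0 y n i Hy) xy).
  by rewrite (B1 n (iter i f x) V (Hhh n _).1 xV); exact: (Hhh n _).2.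
have Hsh : forall x, h (f x) = sigma_star (h x).
  by move=> x; apply: funext => n; apply: funext => i; rewrite /sigma_star /shift /h iterSr.
have Dh : forall M a b, (forall i, (i < M)%N -> hh M (iter i f b) = hh M (iter i f a)) ->
    dPi R (h a) (h b) <= 1 / (M%:R + 1).
  move=> M a b H; apply: dPi_le => n; case: (ltnP n M) => nM.
    apply: (le_trans (term_le1 R X _ _ n)); apply: sd_agree => j jM.
    apply/esym; apply: (B3 n M _ _ (ltnW nM)); exact: H.
  exact: (le_trans (term_le_inv R X _ _ n) (inv_le nM)).
have Dg : forall m y y', inv_limit f U y -> inv_limit f U y' ->
    dPi R y y' < 1 / (m%:R + 1) -> y' m 0%N = y m 0%N.
  move=> m y y' _ _ H; apply/esym/(@sd_lt1 R X).
  have hn : 0 < m%:R + 1 :> R by rewrite ltr_wpDl.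
  have := le_lt_trans (term_le_dPi R y y' m) H.
  by rewrite div1r -[X in _ < X]mul1r ltr_pM2r ?invr_gt0.
have ArchE : forall e : R, 0 < e -> exists M : nat, 1 / (M%:R + 1) < e.
  move=> e e0; have [k Hk] := ltr_add_invr e0; exists k.
  by rewrite natr1 div1r; rewrite add0r in Hk.
have gc : cont_on (@dPi R X) d (inv_limit f U) g.
  move=> y Hy e e0.
  have zz : d (g y) (g y) < e by case: Hm => _ dE _ _; rewrite (proj2 (dE _ _) erefl).
  have [m [B UB [Bz BO]]] := Hbas _ (g y) (open_ball (g y) e Hm) zz.
  exists (1 / (m%:R + 1)); first exact: inv_pos.
  move=> y' Hy' yy'; apply: BO.
  have E := Dg m y y' Hy Hy' yy'.
  have := Hg y' Hy' m; rewrite E.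
  by rewrite (blk_unique (HU m) (Y0 y m 0%N Hy) UB (Hg y Hy m) Bz).
have hcK : forall a K N, exists2 del : R, 0 < del & forall b, d a b < del ->
    forall i, (i < K)%N -> hh N (iter i f b) = hh N (iter i f a).
  move=> a; elim=> [|K IH] N; first by exists 1 => // b _ i.
  have [del1 d10 H1] := IH N.
  have [eps eps0 Heps] := Uopen N _ (Hhh N (iter K f a)).1 (iter K f a) (Hhh N _).2.
  have [del2 d20 H2] := iter_cont K fc a I eps eps0.
  exists (Order.min del1 del2); first by rewrite lt_min d10 d20.
  move=> b; rewrite lt_min => /andP[b1 b2] i; rewrite ltnS leq_eqVlt => /orP[/eqP ->|iK].
    apply: (B1); first exact: (Hhh N _).1.
    exact: Heps (H2 b I b2).
  exact: H1.
have hc : cont_on d (@dPi R X) setT h.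
  move=> a _ e e0; have [M HM] := ArchE e e0.
  have [del del0 Hdel] := hcK a M M.
  exists del => // b _ ab; apply: le_lt_trans (Dh M a b (Hdel b ab)) HM.
split.
  exists h, g; split => //.
move=> [Htd Hts] fu.
exists h, g; split => //.
  move=> e e0; have [M HM] := ArchE e e0.
  have hcK' : forall K, exists2 del : R, 0 < del & forall a b, d a b < del ->
    forall i, (i < K)%N -> hh M (iter i f b) = hh M (iter i f a).
    elim=> [|K IH]; first by exists 1 => // a b _ i.
    have [del1 d10 H1] := IH.
    have [rho rho0 Hrho] := Hts M.
    have [del2 d20 H2] := iter_ucont K fu rho rho0.
    exists (Order.min del1 del2); first by rewrite lt_min d10 d20.
    move=> a b; rewrite lt_min => /andP[b1 b2] i; rewrite ltnS leq_eqVlt => /orP[/eqP ->|iK].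
      case: (pselect (hh M (iter K f b) = hh M (iter K f a))) => // NE; exfalso.
      have := Hrho _ _ (Hhh M (iter K f a)).1 (Hhh M (iter K f b)).1 (fun E => NE (esym E)) _ _ (Hhh M _).2 (Hhh M _).2.
      by rewrite leNgt (H2 a b I I b2).
    exact: H1.
  have [del del0 Hdel] := hcK' M.
  exists del => // a b _ _ ab; apply: le_lt_trans (Dh M a b (Hdel a b ab)) HM.
move=> e e0.
have [N HN] := Htd (e / 2) (divr_gt0 e0 (ltr0Sn R 1)).
exists (1 / (N%:R + 1)); first exact: inv_pos.
move=> y y' Hy Hy' yy'.
have E := Dg N y y' Hy Hy' yy'.
apply: le_lt_trans (HN N (leqnn N) (y N 0%N) (Y0 y N 0%N Hy) _ _ (Hg y Hy N) _) _.
  by rewrite -E; exact: Hg y' Hy' N.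
lra.
Qed.
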